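(* Let $\Gamma$ be the first Grigorchuk group with generators $a,b,c,d$, acting on the right on $\{0,1\}^{\mathbb N}$, and let $\rho=111\cdots$. For a word $w=w_1\cdots w_n$ over $\{a,b,c,d\}$ set $\delta(w)=\#\{\rho\,w_{i+1}\cdots w_n: i=0,\dots,n\}$. Let $\eta$ be the real root of $t^3+t^2+t-2$. There exists a constant $C$ such that for every $n\in\mathbb N$ there exists a word $w_n$ over $\{a,b,c,d\}$ of length at most $C(2/\eta)^n$ with $\delta(w_n)\ge 2^n$.
   Context: The first Grigorchuk group $\Gamma$ is the group of permutations of $\{0,1\}^{\mathbb N}$ (acting on the right) generated by $a,b,c,d$, defined recursively for $x\in\{0,1\}$ and infinite binary sequences $u$ by: $(xu)a=(1-x)u$; $(0u)b=0(ua)$, $(1u)b=1(uc)$; $(0u)c=0(ua)$, $(1u)c=1(ud)$; $(0u)d=0u$, $(1u)d=1(ub)$. *)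

(* Defs.v *)
From Stdlib Require Import Reals List ClassicalEpsilon.
Import ListNotations.

Inductive gen : Type := ga | gb | gc | gd.

(* Internal states: generators plus the identity (needed for d on 0u). *)
Inductive state : Type := Sa | Sb | Sc | Sd | Se.

(* Points of the boundary {0,1}^N; false = 0, true = 1. *)
Definition point := nat -> bool.

Definition shift (u : point) : point := fun n => u (S n).

(* app s u k = k-th letter of the image of u under the state s.
   (xu)a = (1-x)u; (0u)b = 0(ua), (1u)b = 1(uc); (0u)c = 0(ua), (1u)c = 1(ud);
   (0u)d = 0u, (1u)d = 1(ub). *)
Fixpoint app (s : state) (u : point) (k : nat) {struct k} : bool :=
  match k with
  | O => match s with Sa => negb (u O) | _ => u O end
  | S k' =>
      match s with
      | Sa | Se => u (S k')
      | Sb => app (if u O then Sc else Sa) (shift u) k'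
      | Sc => app (if u O then Sd else Sa) (shift u) k'
      | Sd => app (if u O then Sb else Se) (shift u) k'
      end
  end.

Definition state_of (g : gen) : state :=
  match g with ga => Sa | gb => Sb | gc => Sc | gd => Sd end.

Definition act (u : point) (g : gen) : point := app (state_of g) u.

Definition act_word (u : point) (w : list gen) : point := fold_left act w u.

Definition rho : point := fun _ => true.

Definition eqb_pt (x y : point) : bool :=
  if excluded_middle_informative (x = y) then true else false.

Fixpoint nb_distinct (l : list point) : nat :=
  match l with
  | [] => O
  | x :: l' => if existsb (eqb_pt x) l' then nb_distinct l' else S (nb_distinct l')
  end.

Definition delta (w : list gen) : nat :=
  nb_distinct (map (fun i => act_word rho (skipn i w)) (seq 0 (S (length w)))).

(* Main.v *)
Require Import Defs.
From Stdlib Require Import Reals List Lra Lia Psatz Bool FunctionalExtensionality ClassicalEpsilon.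
Import ListNotations.
Open Scope R_scope.

Inductive L3 : Type := LB | LC | LD.
Definition emb (y : L3) : gen := match y with LB => gb | LC => gc | LD => gd end.
Definition phi (y : L3) : list L3 :=
  match y with LB => [LB;LD;LC] | LC => [LB;LB] | LD => [LC;LC] end.
Definition Phi (l : list L3) : list L3 := flat_map phi l.
Definition Aw (l : list L3) : list gen := flat_map (fun y => [ga; emb y]) l.
Definition Bw (l : list L3) : list gen := flat_map (fun y => [emb y; ga]) l.
Fixpoint ob (l : list L3) : bool :=
  match l with [] => false | LB :: l' => negb (ob l') | _ :: l' => ob l' end.
Definition af (e : bool) (v : point) : point := if e then act v ga else v.
Definition pc (b : bool) (t : point) : point :=
  fun k => match k with O => b | S k' => t k' end.

Lemma act_word_cons u g l : act_word u (g :: l) = act_word (act u g) l.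
Proof. reflexivity. Qed.
Lemma act_word_app u l1 l2 : act_word u (l1 ++ l2) = act_word (act_word u l1) l2.
Proof. unfold act_word. apply fold_left_app. Qed.

Lemma aa u : act (act u ga) ga = u.
Proof.
  apply functional_extensionality; intros [|k]; unfold act; simpl.
  - destruct (u 0%nat); reflexivity.
  - reflexivity.
Qed.

Lemma app_Se u k : Defs.app Se u k = u k.
Proof. destruct k; reflexivity. Qed.

Definition nxt (s : state) (x : bool) : state :=
  match s with
  | Sa | Se => Se
  | Sb => if x then Sc else Sa
  | Sc => if x then Sd else Sa
  | Sd => if x then Sb else Se
  end.
Lemma shapp s t : shift (Defs.app s t) = Defs.app (nxt s (t 0%nat)) (shift t).
Proof.
  apply functional_extensionality; intro k. unfold shift at 1; simpl.
  destruct s; simpl; destruct (t 0%nat); try reflexivity; rewrite app_Se; reflexivity.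
Qed.
Lemma appSe_f u : Defs.app Se u = u.
Proof. apply functional_extensionality; apply app_Se. Qed.

Lemma app0 s t : s <> Sa -> Defs.app s t 0%nat = t 0%nat.
Proof. destruct s; simpl; congruence. Qed.

Lemma klein : forall k t, Defs.app Sd (Defs.app Sc t) k = Defs.app Sb t k /\
  Defs.app Sb (Defs.app Sd t) k = Defs.app Sc t k /\ Defs.app Sc (Defs.app Sb t) k = Defs.app Sd t k.
Proof.
  induction k as [|k IH]; intro t.
  - simpl. auto.
  - cbn [Defs.app]. rewrite !shapp. simpl nxt.
    destruct (t 0%nat) eqn:E.
    + destruct (IH (shift t)) as [H1 [H2 H3]]. repeat split; assumption.
    + rewrite !appSe_f. repeat split; try reflexivity. exact (f_equal (fun f => f k) (aa (shift t))).
Qed.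

Lemma cd t : act (act t gc) gd = act t gb.
Proof. apply functional_extensionality; intro k. apply (klein k t). Qed.

Lemma pa b t : act (pc b t) ga = pc (negb b) t.
Proof. apply functional_extensionality; intros [|k]; reflexivity. Qed.
Lemma pbT t : act (pc true t) gb = pc true (act t gc).
Proof. apply functional_extensionality; intros [|k]; reflexivity. Qed.
Lemma pbF t : act (pc false t) gb = pc false (act t ga).
Proof. apply functional_extensionality; intros [|k]; reflexivity. Qed.
Lemma pcT t : act (pc true t) gc = pc true (act t gd).
Proof. apply functional_extensionality; intros [|k]; reflexivity. Qed.
Lemma pcF t : act (pc false t) gc = pc false (act t ga).
Proof. apply functional_extensionality; intros [|k]; reflexivity. Qed.
Lemma pdT t : act (pc true t) gd = pc true (act t gb).
Proof. apply functional_extensionality; intros [|k]; reflexivity. Qed.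
Lemma pdF t : act (pc false t) gd = pc false t.
Proof. apply functional_extensionality; intros [|k]; [reflexivity|]. unfold act; simpl; apply app_Se. Qed.

Lemma AB l : ga :: Bw l = Aw l ++ [ga].
Proof. induction l as [|y l IH]; [reflexivity|]. simpl. rewrite IH. reflexivity. Qed.

Lemma ABact X l : act_word (act X ga) (Bw l) = act (act_word X (Aw l)) ga.
Proof.
  rewrite <- act_word_cons, AB, act_word_app. reflexivity.
Qed.

Lemma keyK : forall l t,
  act_word (pc true t) (Aw (Phi l)) = pc (negb (ob l)) (af (ob l) (act_word t (Aw l)))
  /\ act_word (pc false t) (Aw (Phi l)) = pc (ob l) (af (ob l) (act_word t (Bw l))).
Proof.
  induction l as [|y l IH]; intro t.
  - split; reflexivity.
  - unfold Phi, Aw, Bw in *. destruct y; cbn [flat_map phi emb List.app ob];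
    rewrite ?act_word_cons; split.
    + rewrite pa, pbF, pa, pdT, pa, pcF. rewrite (proj2 (IH _)).
      rewrite negb_involutive. fold (Bw l). fold (Aw l). rewrite ABact.
      destruct (ob l); simpl; rewrite ?aa; reflexivity.
    + rewrite pa, pbT, pa, pdF, pa, pcT. rewrite cd. rewrite (proj1 (IH _)).
      fold (Bw l). fold (Aw l). rewrite ABact.
      destruct (ob l); simpl; rewrite ?aa; reflexivity.
    + rewrite pa, pbF, pa, pbT. rewrite (proj1 (IH _)). reflexivity.
    + rewrite pa, pbT, pa, pbF. rewrite (proj2 (IH _)). reflexivity.
    + rewrite pa, pcF, pa, pcT. rewrite (proj1 (IH _)). reflexivity.
    + rewrite pa, pcT, pa, pcF. rewrite (proj2 (IH _)). reflexivity.
Qed.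

Definition Pt (l : list L3) : point := act_word rho (Aw l).

Lemma rho_pc : rho = pc true rho.
Proof. apply functional_extensionality; intros [|k]; reflexivity. Qed.
Lemma rho_a : act rho ga = pc false rho.
Proof. apply functional_extensionality; intros [|k]; reflexivity. Qed.

Lemma Pt_Phi l : Pt (Phi l) = pc (negb (ob l)) (af (ob l) (Pt l)).
Proof.
  unfold Pt. pose proof (proj1 (keyK l rho)) as H. rewrite <- rho_pc in H. exact H.
Qed.

Lemma Pt_ell y l : (y = LB \/ y = LC) ->
  Pt (y :: Phi l) = pc (ob l) (af (ob l) (act (Pt l) ga)).
Proof.
  intros Hy. unfold Pt. cbn [Aw flat_map]. simpl List.app.
  rewrite !act_word_cons. rewrite rho_a.
  replace (act (pc false rho) (emb y)) with (pc false (act rho ga))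
    by (destruct Hy; subst; simpl; [rewrite pbF|rewrite pcF]; reflexivity).
  rewrite (proj2 (keyK l _)). rewrite ABact. reflexivity.
Qed.

Definition suf (l Y : list L3) := exists pre, Y = pre ++ l.

Lemma suf_Phi l Y : suf l Y -> suf (Phi l) (Phi Y).
Proof. intros [pre ->]. exists (Phi pre). unfold Phi. apply flat_map_app. Qed.

Lemma suf_ell l Y : suf l Y ->
  exists y, (y = LB \/ y = LC) /\ suf (y :: Phi l) (LC :: Phi Y).
Proof.
  intros [pre ->]. destruct pre as [|z pre'] using rev_ind.
  - exists LC. split; [auto|]. exists []. reflexivity.
  - unfold Phi. rewrite !flat_map_app. destruct z; cbn [flat_map phi].
    + exists LC. split; [auto|]. exists (LC :: flat_map phi pre' ++ [LB;LD]).
      simpl. rewrite <- !app_assoc. reflexivity.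
    + exists LB. split; [auto|]. exists (LC :: flat_map phi pre' ++ [LB]).
      simpl. rewrite <- !app_assoc. reflexivity.
    + exists LC. split; [auto|]. exists (LC :: flat_map phi pre' ++ [LC]).
      simpl. rewrite <- !app_assoc. reflexivity.
Qed.

Fixpoint Yp (n : nat) : list L3 :=
  match n with O => [] | S m => LD :: LC :: Phi (Yp m) end.

Lemma NoDup_map_inj {A B} (f : A -> B) (l : list A) :
  (forall x y, f x = f y -> x = y) -> NoDup l -> NoDup (map f l).
Proof.
  intros Hf Hl. induction Hl as [|x l Hx Hl IH]; simpl; constructor; auto.
  intro H. apply in_map_iff in H. destruct H as [z [Hz Hin]].
  apply Hf in Hz. subst. contradiction.
Qed.

Lemma pc_inj b t t' : pc b t = pc b t' -> t = t'.
Proof.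
  intro H. apply functional_extensionality; intro k.
  exact (f_equal (fun u => u (S k)) H).
Qed.

Lemma Inv n : exists L : list point, NoDup L /\ length L = (2 ^ n)%nat /\
  forall p, In p L -> exists l, suf l (Yp n) /\ p = Pt l.
Proof.
  induction n as [|n IH].
  - exists [rho]. split; [repeat constructor; simpl; tauto|]. split; [reflexivity|].
    intros p [<-|[]]. exists []. split; [exists []; reflexivity|reflexivity].
  - destruct IH as [L [HN [Hlen HL]]].
    exists (map (pc true) L ++ map (fun p => pc false (act p ga)) L).
    split; [|split].
    + apply NoDup_app.
      * apply NoDup_map_inj; [apply pc_inj|exact HN].
      * apply NoDup_map_inj; [|exact HN]. intros x y H. apply pc_inj in H.
        rewrite <- (aa x), <- (aa y), H. reflexivity.
      * intros a Ha Hb. apply in_map_iff in Ha. apply in_map_iff in Hb.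
        destruct Ha as [x [<- _]]. destruct Hb as [y [Hy _]].
        pose proof (f_equal (fun u => u 0%nat) Hy) as H0. simpl in H0. discriminate.
    + rewrite length_app, !length_map, Hlen. simpl. lia.
    + intros p Hp. apply in_app_or in Hp.
      assert (HS : forall l, suf l (Yp n) ->
        suf (Phi l) (Yp (S n)) /\ exists y, (y = LB \/ y = LC) /\ suf (y :: Phi l) (Yp (S n))).
      { intros l Hl. split.
        - destruct (suf_Phi _ _ Hl) as [pre Hpre]. exists (LD :: LC :: pre). simpl. rewrite Hpre. reflexivity.
        - destruct (suf_ell _ _ Hl) as [y [Hy [pre Hpre]]]. exists y. split; [exact Hy|].
          exists (LD :: pre). simpl. rewrite Hpre. reflexivity. }
      destruct Hp as [Hp|Hp]; apply in_map_iff in Hp; destruct Hp as [q [<- Hq]];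
        destruct (HL q Hq) as [l [Hl ->]]; destruct (HS l Hl) as [H1 [y [Hy H2]]].
      * destruct (ob l) eqn:E.
        -- exists (y :: Phi l). split; [exact H2|]. rewrite Pt_ell by exact Hy. rewrite E. simpl. rewrite aa. reflexivity.
        -- exists (Phi l). split; [exact H1|]. rewrite Pt_Phi, E. reflexivity.
      * destruct (ob l) eqn:E.
        -- exists (Phi l). split; [exact H1|]. rewrite Pt_Phi, E. reflexivity.
        -- exists (y :: Phi l). split; [exact H2|]. rewrite Pt_ell by exact Hy. rewrite E. reflexivity.
Qed.

Lemma eqb_pt_true x y : eqb_pt x y = true -> x = y.
Proof. unfold eqb_pt. destruct (excluded_middle_informative (x = y)); [auto|discriminate]. Qed.

Lemma nb_distinct_spec l : exists l', NoDup l' /\ (forall x, In x l <-> In x l') /\ length l' = nb_distinct l.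
Proof.
  induction l as [|x l IH].
  - exists []. split; [constructor|]. split; [tauto|reflexivity].
  - destruct IH as [l' [HN [Hin Hlen]]]. simpl.
    destruct (existsb (eqb_pt x) l) eqn:E.
    + apply existsb_exists in E. destruct E as [z [Hz Hxz]]. apply eqb_pt_true in Hxz. subst z.
      exists l'. split; [exact HN|]. split; [|exact Hlen].
      intro y. rewrite <- Hin. simpl. split; [intros [<-|H]; auto|auto].
    + exists (x :: l'). split; [|split].
      * constructor; [|exact HN]. rewrite <- Hin. intro Hx.
        assert (existsb (eqb_pt x) l = true).
        { apply existsb_exists. exists x. split; [exact Hx|]. unfold eqb_pt.
          destruct (excluded_middle_informative (x = x)); [reflexivity|congruence]. }
        congruence.
      * intro y. simpl. rewrite Hin. tauto.
      * simpl. lia.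
Qed.

Lemma delta_ge w L : NoDup L ->
  (forall p, In p L -> exists i, (i <= length w)%nat /\ p = act_word rho (skipn i w)) ->
  (length L <= delta w)%nat.
Proof.
  intros HN HL. unfold delta.
  destruct (nb_distinct_spec (map (fun i => act_word rho (skipn i w)) (seq 0 (S (length w)))))
    as [l' [HN' [Hin Hlen]]].
  rewrite <- Hlen. apply NoDup_incl_length; [exact HN|].
  intros p Hp. apply Hin. destruct (HL p Hp) as [i [Hi ->]].
  apply in_map_iff. exists i. split; [reflexivity|]. apply in_seq. lia.
Qed.

Lemma length_Aw l : length (Aw l) = (2 * length l)%nat.
Proof. induction l as [|y l IH]; [reflexivity|]. simpl. fold (Aw l). rewrite IH. lia. Qed.

Lemma Aw_app l1 l2 : Aw (l1 ++ l2) = Aw l1 ++ Aw l2.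
Proof. apply flat_map_app. Qed.

Lemma skipn_len {A} (l1 l2 : list A) : skipn (length l1) (l1 ++ l2) = l2.
Proof. induction l1; simpl; auto. Qed.

Lemma delta_W n : (2 ^ n <= delta (gb :: Aw (Yp n)))%nat.
Proof.
  destruct (Inv n) as [L [HN [Hlen HL]]]. rewrite <- Hlen.
  apply delta_ge; [exact HN|].
  intros p Hp. destruct (HL p Hp) as [l [[pre Hpre] ->]].
  exists (S (length (Aw pre))). split.
  - simpl. rewrite Hpre, Aw_app, length_app. lia.
  - simpl. rewrite Hpre, Aw_app, skipn_len. reflexivity.
Qed.

Definition lw (e : R) (y : L3) : R := match y with LB => 1 | LC => e | LD => e ^ 2 end.
Fixpoint wt (e : R) (l : list L3) : R := match l with [] => 0 | y :: l' => lw e y + wt e l' end.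

Lemma wt_app e l1 l2 : wt e (l1 ++ l2) = wt e l1 + wt e l2.
Proof. induction l1; simpl; [lra|]. rewrite IHl1. lra. Qed.

Lemma eta_bounds e : e ^ 3 + e ^ 2 + e - 2 = 0 -> 0 < e < 1.
Proof. intro H. split; nra. Qed.

Lemma wt_Phi e l : e ^ 3 + e ^ 2 + e - 2 = 0 -> wt e (Phi l) = 2 / e * wt e l.
Proof.
  intro H. destruct (eta_bounds e H) as [H0 H1].
  assert (H2 : 2 / e = e ^ 2 + e + 1).
  { apply (Rmult_eq_reg_r e); [|lra]. unfold Rdiv. rewrite Rmult_assoc, Rinv_l by lra. nra. }
  rewrite H2. induction l as [|y l IH]; simpl; [ring|].
  unfold Phi in *. rewrite wt_app, IH. destruct y; simpl; nra.
Qed.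

Lemma wt_len e l : 0 < e < 1 -> INR (length l) * e ^ 2 <= wt e l.
Proof.
  intro He. induction l as [|y l IH]; [simpl; lra|].
  change (length (y :: l)) with (S (length l)). rewrite S_INR. destruct y; simpl lw; simpl wt; nra.
Qed.

Lemma wt_Y e n : e ^ 3 + e ^ 2 + e - 2 = 0 -> wt e (LB :: Yp n) = (2 / e) ^ n.
Proof.
  intro H. induction n as [|n IH].
  - simpl. ring.
  - change (LB :: Yp (S n)) with (Phi (LB :: Yp n)). rewrite wt_Phi by exact H. rewrite IH. simpl. ring.
Qed.

Theorem proposition4p7 :
  forall eta : R, eta ^ 3 + eta ^ 2 + eta - 2 = 0 ->
  exists C : R, forall n : nat, exists w : list gen,
    INR (length w) <= C * (2 / eta) ^ n /\ (2 ^ n <= delta w)%nat.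
Proof.
  intros e H. destruct (eta_bounds e H) as [H0 H1].
  exists (2 / e ^ 2). intro n. exists (gb :: Aw (Yp n)). split; [|apply delta_W].
  pose proof (wt_len e (LB :: Yp n) (conj H0 H1)) as Hl. rewrite wt_Y in Hl by exact H.
  simpl length in *. rewrite length_Aw.
  assert (Hpos : 0 < e ^ 2) by nra.
  set (m := length (Yp n)) in *.
  assert (Hm : INR (S (2 * m)) <= 2 * INR (S m)).
  { rewrite !S_INR, mult_INR. simpl. pose proof (pos_INR m). lra. }
  assert (Hl' : INR (S m) <= (2 / e) ^ n / e ^ 2).
  { apply (Rmult_le_reg_r (e ^ 2)); [exact Hpos|].
    replace ((2 / e) ^ n / e ^ 2 * e ^ 2) with ((2 / e) ^ n) by (field; lra). lra. }
  replace (2 / e ^ 2 * (2 / e) ^ n) with (2 * ((2 / e) ^ n / e ^ 2)) by (unfold Rdiv; ring).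
  lra.
Qed.
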